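(* For real $u,w$ and an integer $n\ge1$ let $g_n(u,w):=\sum_{i=1}^n i\,w^{i-1}u^{n-i}$. For every natural number $m\ge1$: (i) $$g_{4m+1}(w,u)-g_{4m+1}(u,w)=\sum_{i=0}^{2m-1}(4m-2i)(uw)^i\left(u^{4m-2i}-w^{4m-2i}\right)$$ $$=(u+w)\sum_{i=0}^{m-1}(4m-2-4i)\left(u^{4m-1-4i}-w^{4m-1-4i}\right)(uw)^{2i}+2\sum_{i=0}^{m-1}\left(u^{4m-4i}-w^{4m-4i}\right)(uw)^{2i};$$ (ii) $$g_{4m+3}(w,u)-g_{4m+3}(u,w)=\sum_{i=0}^{2m}(4m+2-2i)(uw)^i\left(u^{4m+2-2i}-w^{4m+2-2i}\right)$$ $$=(u+w)\sum_{i=0}^{m-1}(4m-4i)\left(u^{4m+1-4i}-w^{4m+1-4i}\right)(uw)^{2i}+2\sum_{i=0}^{m}\left(u^{4m+2-4i}-w^{4m+2-4i}\right)(uw)^{2i}.$$ Furthermore, let $\beta>0$, $k>0$, and $w=\delta(u)$ with $\delta$ the involution defined in the context. Then for all odd integers $n\ge3$: (a) if $-k<u_0<0$, then $g_n(u,w)>g_n(w,u)$ for all $u\in(0,u_1)$; (b) if $u_0<-k$, then $g_n(u,w)<g_n(w,u)$ for all $u\in(0,k)$.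
   Context: $\Phi(u)=\beta\left(-\frac{u^4}{4}+\frac{k+u_0}{3}u^3-\frac{ku_0}{2}u^2\right)$. Case $-k<u_0<0$: $u_1$ is the unique point of $(0,k)$ with $\Phi(u_1)=\Phi(u_0)$, and for $u\in(0,u_1)$, $\delta(u)$ is the unique $w\in(u_0,0)$ with $\Phi(w)=\Phi(u)$. Case $u_0<-k$: $w_2$ is the unique point of $(u_0,0)$ with $\Phi(w_2)=\Phi(k)$, and for $u\in(0,k)$, $\delta(u)$ is the unique $w\in(w_2,0)$ with $\Phi(w)=\Phi(u)$. *)

(* Defs.v *)
From mathcomp Require Import all_boot all_order all_algebra.
From mathcomp Require Import reals.
Set Implicit Arguments. Unset Strict Implicit. Unset Printing Implicit Defensive.
Import Order.TTheory GRing.Theory Num.Theory.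
Local Open Scope ring_scope.

Definition gfun (R : ringType) (n : nat) (u w : R) : R :=
  \sum_(1 <= i < n.+1) i%:R * w ^+ i.-1 * u ^+ (n - i).

Definition Phi (R : realType) (beta k u0 u : R) : R :=
  beta * (- (u ^+ 4) / 4%:R + (k + u0) / 3%:R * u ^+ 3 - k * u0 / 2%:R * u ^+ 2).

(* Main.v *)
Require Import Defs.
From mathcomp Require Import all_boot all_order all_algebra.
From mathcomp Require Import reals ring lra zify.
Import Order.TTheory GRing.Theory Num.Theory.
Local Open Scope ring_scope.

Section S.
Variable R : realType.
Implicit Types u w : R.

Lemma gW n u w : gfun n w u =
  \sum_(0 <= j < n) (j.+1)%:R * u ^+ j * w ^+ (n - j.+1).
Proof. by rewrite /gfun big_add1. Qed.

Lemma gU n u w : gfun n u w =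
  \sum_(0 <= j < n) (n - j)%:R * u ^+ j * w ^+ (n - j.+1).
Proof.
rewrite /gfun big_add1 /= big_nat_rev /=.
apply: eq_big_nat => j /andP[_ hj].
rewrite add0n.
have e1 : ((n - j.+1).+1 = n - j)%N by lia.
have e2 : (n - (n - j) = j)%N by lia.
rewrite e1 e2; ring.
Qed.

Lemma gD n u w : gfun n w u - gfun n u w =
  \sum_(0 <= j < n) ((j.+1)%:R - (n - j)%:R) * u ^+ j * w ^+ (n - j.+1).
Proof.
rewrite gW gU -sumrB; apply: eq_big_nat => j _; ring.
Qed.

Definition T M u w := \sum_(0 <= i < M) (2 * M - 2 * i)%:R * (u * w) ^+ i
            * (u ^+ (2 * M - 2 * i) - w ^+ (2 * M - 2 * i)).

Lemma DT M u w : gfun (2 * M).+1 w u - gfun (2 * M).+1 u w = T M u w.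
Proof.
rewrite gD /T; elim: M => [|M IH].
  by rewrite !big_nat1 big_geq //= subrr !mul0r.
have E : (2 * M.+1 = (2*M).+2)%N by lia.
rewrite E big_nat_recr // [X in X + _ = _]big_nat_recl // [RHS]big_nat_recl //.
have [K KE] : exists K, K = (2*M)%N by eexists.
rewrite /T -KE in IH *.
have -> : \sum_(0 <= i < K.+1)
   (((i.+1).+1)%:R - (K.+3 - i.+1)%:R) * u ^+ i.+1 * w ^+ (K.+3 - (i.+1).+1)
   = (u * w) * \sum_(0 <= j < K.+1) ((j.+1)%:R - (K.+1 - j)%:R) * u ^+ j * w ^+ (K.+1 - j.+1).
  rewrite big_distrr; apply: eq_big_nat => j /andP[_ hj].
  have e1 : (K.+3 - j.+1 = (K.+1 - j).+1)%N by lia.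
  have e2 : (K.+3 - (j.+1).+1 = (K.+1 - j.+1).+1)%N by lia.
  rewrite e1 e2 /= !exprS; ring.
rewrite IH.
have -> : \sum_(0 <= i < M) (K.+2 - 2 * i.+1)%:R * (u * w) ^+ i.+1 *
      (u ^+ (K.+2 - 2 * i.+1) - w ^+ (K.+2 - 2 * i.+1))
    = (u * w) * \sum_(0 <= i < M) (K - 2 * i)%:R * (u * w) ^+ i * (u ^+ (K - 2 * i) - w ^+ (K - 2 * i)).
  rewrite big_distrr; apply: eq_big_nat => j /andP[_ hj].
  have e1 : (K.+2 - 2 * j.+1 = K - 2 * j)%N by lia.
  rewrite e1 /= exprS; ring.
have e3 : (K.+3 - 0 = K.+3)%N by lia.
have e4 : (K.+3 - K.+3 = 0)%N by lia.
have e5 : (K.+3 - K.+2 = 1)%N by lia.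
have e6 : (K.+3 - 1 = K.+2)%N by lia.
have e7 : (K.+2 - 2 * 0 = K.+2)%N by lia.
rewrite e3 e4 e5 e6 e7 /= !expr0; ring.
Qed.

Lemma pair_sum (F : nat -> R) m :
  \sum_(0 <= i < 2 * m) F i = \sum_(0 <= j < m) (F (2 * j)%N + F (2 * j).+1).
Proof.
elim: m => [|m IH]; first by rewrite !big_geq.
have E : (2 * m.+1 = (2 * m).+2)%N by lia.
rewrite E !big_nat_recr // IH; exact: esym (addrA _ _ _).
Qed.

Lemma S1 m u w :
  \sum_(0 <= i < 2 * m) (4 * m - 2 * i)%:R * (u * w) ^+ i
            * (u ^+ (4 * m - 2 * i) - w ^+ (4 * m - 2 * i))
        = (u + w) * \sum_(0 <= i < m) (4 * m - 2 - 4 * i)%:R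
              * (u ^+ (4 * m - 1 - 4 * i) - w ^+ (4 * m - 1 - 4 * i)) * (u * w) ^+ (2 * i)
          + 2%:R * \sum_(0 <= i < m)
              (u ^+ (4 * m - 4 * i) - w ^+ (4 * m - 4 * i)) * (u * w) ^+ (2 * i).
Proof.
rewrite pair_sum !big_distrr -big_split.
apply: eq_big_nat => j /andP[_ hj].
have [E EE] : exists E, E = (4 * m - 4 * j - 2)%N by eexists.
have e1 : (4 * m - 2 * (2 * j) = E.+2)%N by lia.
have e2 : (4 * m - 2 * (2 * j).+1 = E)%N by lia.
have e3 : (4 * m - 2 - 4 * j = E)%N by lia.
have e4 : (4 * m - 1 - 4 * j = E.+1)%N by lia.
have e5 : (4 * m - 4 * j = E.+2)%N by lia.
rewrite e1 e2 e3 e4 e5 /= !exprS; ring.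
Qed.

Lemma S2 m u w :
  \sum_(0 <= i < (2 * m).+1) (4 * m + 2 - 2 * i)%:R * (u * w) ^+ i
            * (u ^+ (4 * m + 2 - 2 * i) - w ^+ (4 * m + 2 - 2 * i))
        = (u + w) * \sum_(0 <= i < m) (4 * m - 4 * i)%:R
              * (u ^+ (4 * m + 1 - 4 * i) - w ^+ (4 * m + 1 - 4 * i)) * (u * w) ^+ (2 * i)
          + 2%:R * \sum_(0 <= i < m.+1)
              (u ^+ (4 * m + 2 - 4 * i) - w ^+ (4 * m + 2 - 4 * i)) * (u * w) ^+ (2 * i).
Proof.
have H1 : \sum_(0 <= i < 2 * m) (4 * m + 2 - 2 * i)%:R * (u * w) ^+ i
            * (u ^+ (4 * m + 2 - 2 * i) - w ^+ (4 * m + 2 - 2 * i))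
        = (u + w) * \sum_(0 <= i < m) (4 * m - 4 * i)%:R
              * (u ^+ (4 * m + 1 - 4 * i) - w ^+ (4 * m + 1 - 4 * i)) * (u * w) ^+ (2 * i)
          + 2%:R * \sum_(0 <= i < m)
              (u ^+ (4 * m + 2 - 4 * i) - w ^+ (4 * m + 2 - 4 * i)) * (u * w) ^+ (2 * i).
  rewrite pair_sum !big_distrr -big_split.
  apply: eq_big_nat => j /andP[_ hj].
  have [E EE] : exists E, E = (4 * m - 4 * j)%N by eexists.
  have e1 : (4 * m + 2 - 2 * (2 * j) = E.+2)%N by lia.
  have e2 : (4 * m + 2 - 2 * (2 * j).+1 = E)%N by lia.
  have e4 : (4 * m + 1 - 4 * j = E.+1)%N by lia.
  have e5 : (4 * m + 2 - 4 * j = E.+2)%N by lia.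
  rewrite e1 e2 e4 e5 -EE /= !exprS; ring.
rewrite !big_nat_recr // H1.
have e1 : (4 * m + 2 - 2 * (2 * m) = 2)%N by lia.
have e2 : (4 * m + 2 - 4 * m = 2)%N by lia.
rewrite e1 e2.
set A := \sum_(0 <= i < m) _.
set B := \sum_(0 <= i < m) _.
set C := (u * w) ^+ (2 * m).
rewrite /=; ring.
Qed.

Lemma part12 m u w :
     (gfun (4 * m).+1 w u - gfun (4 * m).+1 u w
        = \sum_(0 <= i < 2 * m) (4 * m - 2 * i)%:R * (u * w) ^+ i
            * (u ^+ (4 * m - 2 * i) - w ^+ (4 * m - 2 * i))
      /\
      \sum_(0 <= i < 2 * m) (4 * m - 2 * i)%:R * (u * w) ^+ i
            * (u ^+ (4 * m - 2 * i) - w ^+ (4 * m - 2 * i))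
        = (u + w) * \sum_(0 <= i < m) (4 * m - 2 - 4 * i)%:R
              * (u ^+ (4 * m - 1 - 4 * i) - w ^+ (4 * m - 1 - 4 * i)) * (u * w) ^+ (2 * i)
          + 2%:R * \sum_(0 <= i < m)
              (u ^+ (4 * m - 4 * i) - w ^+ (4 * m - 4 * i)) * (u * w) ^+ (2 * i))
     /\
     (gfun (4 * m + 3) w u - gfun (4 * m + 3) u w
        = \sum_(0 <= i < (2 * m).+1) (4 * m + 2 - 2 * i)%:R * (u * w) ^+ i
            * (u ^+ (4 * m + 2 - 2 * i) - w ^+ (4 * m + 2 - 2 * i))
      /\
      \sum_(0 <= i < (2 * m).+1) (4 * m + 2 - 2 * i)%:R * (u * w) ^+ i
            * (u ^+ (4 * m + 2 - 2 * i) - w ^+ (4 * m + 2 - 2 * i))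
        = (u + w) * \sum_(0 <= i < m) (4 * m - 4 * i)%:R
              * (u ^+ (4 * m + 1 - 4 * i) - w ^+ (4 * m + 1 - 4 * i)) * (u * w) ^+ (2 * i)
          + 2%:R * \sum_(0 <= i < m.+1)
              (u ^+ (4 * m + 2 - 4 * i) - w ^+ (4 * m + 2 - 4 * i)) * (u * w) ^+ (2 * i)).
Proof.
split; split; [| exact: S1 | | exact: S2].
  have := DT (2 * m) u w; rewrite /T.
  have -> : (2 * (2 * m) = 4 * m)%N by lia.
  done.
have := DT (2 * m).+1 u w; rewrite /T.
have -> : (2 * (2 * m).+1 = 4 * m + 2)%N by lia.
have -> : (4 * m + 3 = (4 * m + 2).+1)%N by lia.
done.
Qed.

Lemma sum_ge0_nat (F : nat -> R) m :
  (forall i, (i < m)%N -> 0 <= F i) -> 0 <= \sum_(0 <= i < m) F i.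
Proof.
elim: m => [|m IH] h; first by rewrite big_geq.
rewrite big_nat_recr //=.
have h1 := h m (ltnSn m).
have h2 : 0 <= \sum_(0 <= i < m) F i by apply: IH => i hi; apply: h; lia.
lra.
Qed.

Lemma sum_gt0_nat (F : nat -> R) m :
  (forall i, (i < m.+1)%N -> 0 < F i) -> 0 < \sum_(0 <= i < m.+1) F i.
Proof.
move=> h; rewrite big_nat_recr //=.
have h1 := h m (ltnSn m).
have h2 : 0 <= \sum_(0 <= i < m) F i.
  by apply: sum_ge0_nat => i hi; apply: ltW; apply: h; lia.
lra.
Qed.

Lemma odd_pos u w e : 0 < u -> w < 0 -> odd e -> 0 < u ^+ e - w ^+ e.
Proof.
move=> hu hw he.
have h1 : 0 < u ^+ e by apply: exprn_gt0.
have h2 : w ^+ e < 0 by rewrite exprn_odd_lt0.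
lra.
Qed.

Lemma ev_pos u w k : 0 < u -> w < 0 -> 0 < u + w -> (0 < k)%N ->
  0 < u ^+ (2 * k) - w ^+ (2 * k).
Proof.
move=> hu hw hs hk; rewrite !exprM.
have h0 : 0 <= w ^+ 2 by apply: sqr_ge0.
have h1 : w ^+ 2 < u ^+ 2 by rewrite !expr2; nra.
have := ltrXn2r k h0 h1; rewrite -lt0n hk => h; lra.
Qed.

Lemma ev_neg u w k : 0 < u -> w < 0 -> u + w < 0 -> (0 < k)%N ->
  u ^+ (2 * k) - w ^+ (2 * k) < 0.
Proof.
move=> hu hw hs hk; rewrite !exprM.
have h0 : 0 <= u ^+ 2 by apply: sqr_ge0.
have h1 : u ^+ 2 < w ^+ 2 by rewrite !expr2; nra.
have := ltrXn2r k h0 h1; rewrite -lt0n hk => h; lra.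
Qed.

Lemma sq_pos u w i : 0 < u -> w < 0 -> 0 < (u * w) ^+ (2 * i).
Proof.
move=> hu hw; rewrite exprM; apply: exprn_gt0; rewrite expr2.
have h : u * w < 0 by rewrite pmulr_rlt0.
by rewrite nmulr_rgt0.
Qed.

Lemma Dsign n u w : odd n -> (3 <= n)%N -> 0 < u -> w < 0 ->
  (u + w < 0 -> gfun n w u - gfun n u w < 0) /\
  (0 < u + w -> 0 < gfun n w u - gfun n u w).
Proof.
move=> hn h3 hu hw.
have h := odd_double_half n; rewrite hn -mul2n in h.
have h2 := odd_double_half n./2; rewrite -mul2n in h2.
move: h2; case: (odd n./2) => /= h2.
-
  have [m hm] : exists m, n = (4 * m + 3)%N by exists (n./2)./2; lia.
  have [[_ _] [E1 E2]] := part12 m u w.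
  rewrite hm E1 E2.
  set P := \sum_(0 <= i < m) _.
  set Q := \sum_(0 <= i < m.+1) _.
  have hP : 0 <= P.
    apply: sum_ge0_nat => i hi.
    apply: mulr_ge0; last by apply: ltW; apply: sq_pos.
    apply: mulr_ge0; first by apply: ler0n.
    apply: ltW; apply: odd_pos => //.
    have -> : (4 * m + 1 - 4 * i = (2 * (2 * m - 2 * i)).+1)%N by lia.
    by rewrite /= mul2n odd_double.
  split => hs.
  + have hQ : Q < 0.
      rewrite /Q -oppr_gt0 -sumrN; apply: sum_gt0_nat => i hi.
      rewrite -mulNr; apply: mulr_gt0; last by apply: sq_pos.
      rewrite oppr_gt0.
      have -> : (4 * m + 2 - 4 * i = 2 * (2 * m + 1 - 2 * i))%N by lia.
      apply: ev_neg => //; lia.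
    nra.
  + have hQ : 0 < Q.
      rewrite /Q; apply: sum_gt0_nat => i hi.
      apply: mulr_gt0; last by apply: sq_pos.
      have -> : (4 * m + 2 - 4 * i = 2 * (2 * m + 1 - 2 * i))%N by lia.
      apply: ev_pos => //; lia.
    nra.
- have [m hm] : exists m, n = (4 * m.+1).+1 by exists ((n./2)./2).-1; lia.
  have [[E1 E2] _] := part12 m.+1 u w.
  rewrite hm E1 E2.
  set P := \sum_(0 <= i < m.+1) _ * _.
  set Q := \sum_(0 <= i < m.+1) _.
  have hP : 0 <= P.
    apply: sum_ge0_nat => i hi.
    apply: mulr_ge0; last by apply: ltW; apply: sq_pos.
    apply: mulr_ge0; first by apply: ler0n.
    apply: ltW; apply: odd_pos => //.
    have -> : (4 * m.+1 - 1 - 4 * i = (2 * (2 * m.+1 - 2 * i - 1)).+1)%N by lia.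
    by rewrite /= mul2n odd_double.
  split => hs.
  + have hQ : Q < 0.
      rewrite /Q -oppr_gt0 -sumrN; apply: sum_gt0_nat => i hi.
      rewrite -mulNr; apply: mulr_gt0; last by apply: sq_pos.
      rewrite oppr_gt0.
      have -> : (4 * m.+1 - 4 * i = 2 * (2 * m.+1 - 2 * i))%N by lia.
      apply: ev_neg => //; lia.
    nra.
  + have hQ : 0 < Q.
      rewrite /Q; apply: sum_gt0_nat => i hi.
      apply: mulr_gt0; last by apply: sq_pos.
      have -> : (4 * m.+1 - 4 * i = 2 * (2 * m.+1 - 2 * i))%N by lia.
      apply: ev_pos => //; lia.
    nra.
Qed.

Definition H12 (p q x : R) := - 3%:R * x ^+ 4 + 4%:R * (p - q) * x ^+ 3 + 6%:R * p * q * x ^+ 2.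

Lemma Hmono p q s t : 0 < p -> 0 < q -> 0 < s -> s <= t -> t <= p ->
  H12 p q s <= H12 p q t.
Proof.
move=> hp hq hs hst htp.
pose B := (4%:R * p * (t^+2 + t*s + s^+2) - 3%:R * (t+s) * (t^+2+s^+2))
          + q * (6%:R * p * (t + s) - 4%:R * (t^+2 + t*s + s^+2)).
have hB1 : 0 <= 4%:R * p * (t^+2 + t*s + s^+2) - 3%:R * (t+s) * (t^+2+s^+2).
  have a1 : 0 <= (p - t) * t^+2 by apply: mulr_ge0; [lra | apply: sqr_ge0].
  have a2 : 0 <= (p - s) * s^+2 by apply: mulr_ge0; [lra | apply: sqr_ge0].
  have a3 : 0 <= (p - t) * (t * s) by apply: mulr_ge0; [lra | nra].
  have a4 : 0 <= (p - s) * (t * s) by apply: mulr_ge0; [lra | nra].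
  have a5 : 0 <= p * (t - s)^+2 by apply: mulr_ge0; [lra | apply: sqr_ge0].
  rewrite !expr2 in a1 a2 a5 *; nra.
have hB2 : 0 <= 6%:R * p * (t + s) - 4%:R * (t^+2 + t*s + s^+2).
  have a1 : 0 <= (p - t) * t by apply: mulr_ge0; lra.
  have a2 : 0 <= (p - s) * s by apply: mulr_ge0; lra.
  have a5 : 0 <= (t - s)^+2 by apply: sqr_ge0.
  rewrite !expr2 in a5 *; nra.
have hB : 0 <= B by rewrite /B; apply: addr_ge0 => //; apply: mulr_ge0 => //; lra.
have e : H12 p q t - H12 p q s = (t - s) * B by rewrite /H12 /B; ring.
have : 0 <= (t - s) * B by apply: mulr_ge0 => //; lra.
rewrite -e; lra.
Qed.

Lemma Phi12 beta k u0 x : Phi beta k u0 x =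
  beta / 12%:R * (- 3%:R * x ^+ 4 + 4%:R * (k + u0) * x ^+ 3 - 6%:R * k * u0 * x ^+ 2).
Proof. by rewrite /Phi; field. Qed.

Lemma Phi_eq beta k u0 x y : 0 < beta -> Phi beta k u0 x = Phi beta k u0 y ->
  - 3%:R * x ^+ 4 + 4%:R * (k + u0) * x ^+ 3 - 6%:R * k * u0 * x ^+ 2
  = - 3%:R * y ^+ 4 + 4%:R * (k + u0) * y ^+ 3 - 6%:R * k * u0 * y ^+ 2.
Proof.
move=> hb; rewrite !Phi12; apply: mulfI.
rewrite mulf_neq0 // ?invr_eq0; first by rewrite gt_eqF.
by rewrite pnatr_eq0.
Qed.

Lemma caseA beta k u0 u w : 0 < beta -> 0 < k -> - k < u0 -> u0 < 0 ->
  0 < u -> u < k -> w < 0 -> Phi beta k u0 w = Phi beta k u0 u -> u + w < 0.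
Proof.
move=> hb hk hu0 hu0' hu huk hw E.
have E' := Phi_eq _ _ _ _ _ hb E.
rewrite ltNge; apply/negP => hs.
have hm := Hmono k (- u0) (- w) u hk ltac:(lra) ltac:(lra) ltac:(lra) ltac:(lra).
have t3 : 0 < (- w) ^+ 3 by apply: exprn_gt0; lra.
have kk : 0 < (k + u0) * (- w) ^+ 3 by apply: mulr_gt0 => //; lra.
have e1 : H12 k (- u0) (- w) - 8%:R * ((k + u0) * (- w) ^+ 3) =
  - 3%:R * w ^+ 4 + 4%:R * (k + u0) * w ^+ 3 - 6%:R * k * u0 * w ^+ 2 by rewrite /H12; ring.
have e2 : H12 k (- u0) u =
  - 3%:R * u ^+ 4 + 4%:R * (k + u0) * u ^+ 3 - 6%:R * k * u0 * u ^+ 2 by rewrite /H12; ring.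
lra.
Qed.

Lemma caseB beta k u0 u w : 0 < beta -> 0 < k -> u0 < - k ->
  0 < u -> u < k -> u0 < w -> w < 0 -> Phi beta k u0 w = Phi beta k u0 u -> 0 < u + w.
Proof.
move=> hb hk hu0 hu huk hw0 hw E.
have E' := Phi_eq _ _ _ _ _ hb E.
rewrite ltNge; apply/negP => hs.
have hm := Hmono (- u0) k u (- w) ltac:(lra) hk hu ltac:(lra) ltac:(lra).
have t3 : 0 < u ^+ 3 by apply: exprn_gt0; lra.
have kk : 0 < (- (k + u0)) * u ^+ 3 by apply: mulr_gt0 => //; lra.
have e1 : H12 (- u0) k (- w) =
  - 3%:R * w ^+ 4 + 4%:R * (k + u0) * w ^+ 3 - 6%:R * k * u0 * w ^+ 2 by rewrite /H12; ring.
have e2 : H12 (- u0) k u - 8%:R * ((- (k + u0)) * u ^+ 3) =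
  - 3%:R * u ^+ 4 + 4%:R * (k + u0) * u ^+ 3 - 6%:R * k * u0 * u ^+ 2 by rewrite /H12; ring.
lra.
Qed.
End S.

Theorem lemma3p9 (R : realType) :
  (forall m : nat, (1 <= m)%N -> forall u w : R,
     (* (i) *)
     (gfun (4 * m).+1 w u - gfun (4 * m).+1 u w
        = \sum_(0 <= i < 2 * m) (4 * m - 2 * i)%:R * (u * w) ^+ i
            * (u ^+ (4 * m - 2 * i) - w ^+ (4 * m - 2 * i))
      /\
      \sum_(0 <= i < 2 * m) (4 * m - 2 * i)%:R * (u * w) ^+ i
            * (u ^+ (4 * m - 2 * i) - w ^+ (4 * m - 2 * i))
        = (u + w) * \sum_(0 <= i < m) (4 * m - 2 - 4 * i)%:R
              * (u ^+ (4 * m - 1 - 4 * i) - w ^+ (4 * m - 1 - 4 * i)) * (u * w) ^+ (2 * i)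
          + 2%:R * \sum_(0 <= i < m)
              (u ^+ (4 * m - 4 * i) - w ^+ (4 * m - 4 * i)) * (u * w) ^+ (2 * i))
     /\
     (* (ii) *)
     (gfun (4 * m + 3) w u - gfun (4 * m + 3) u w
        = \sum_(0 <= i < (2 * m).+1) (4 * m + 2 - 2 * i)%:R * (u * w) ^+ i
            * (u ^+ (4 * m + 2 - 2 * i) - w ^+ (4 * m + 2 - 2 * i))
      /\
      \sum_(0 <= i < (2 * m).+1) (4 * m + 2 - 2 * i)%:R * (u * w) ^+ i
            * (u ^+ (4 * m + 2 - 2 * i) - w ^+ (4 * m + 2 - 2 * i))
        = (u + w) * \sum_(0 <= i < m) (4 * m - 4 * i)%:R
              * (u ^+ (4 * m + 1 - 4 * i) - w ^+ (4 * m + 1 - 4 * i)) * (u * w) ^+ (2 * i)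
          + 2%:R * \sum_(0 <= i < m.+1)
              (u ^+ (4 * m + 2 - 4 * i) - w ^+ (4 * m + 2 - 4 * i)) * (u * w) ^+ (2 * i)))
  /\
  (forall beta k u0 : R, 0 < beta -> 0 < k ->
     (* (a) case -k < u0 < 0; u1 = the point of (0,k) with Phi u1 = Phi u0;
        w = delta u = the point of (u0,0) with Phi w = Phi u *)
     (- k < u0 -> u0 < 0 ->
        forall u1 : R, 0 < u1 -> u1 < k -> Phi beta k u0 u1 = Phi beta k u0 u0 ->
        forall n : nat, odd n -> (3 <= n)%N ->
        forall u : R, 0 < u -> u < u1 ->
        forall w : R, u0 < w -> w < 0 -> Phi beta k u0 w = Phi beta k u0 u ->
          gfun n w u < gfun n u w)
     /\
     (* (b) case u0 < -k; w2 = the point of (u0,0) with Phi w2 = Phi k;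
        w = delta u = the point of (w2,0) with Phi w = Phi u *)
     (u0 < - k ->
        forall w2 : R, u0 < w2 -> w2 < 0 -> Phi beta k u0 w2 = Phi beta k u0 k ->
        forall n : nat, odd n -> (3 <= n)%N ->
        forall u : R, 0 < u -> u < k ->
        forall w : R, w2 < w -> w < 0 -> Phi beta k u0 w = Phi beta k u0 u ->
          gfun n u w < gfun n w u)).
Proof.
split.
  move=> m _ u w; exact: (part12 R m u w).
move=> beta k u0 hb hk; split.
  move=> hu0 hu0' u1 hu1 hu1k _ n hn h3 u hu huu1 w hw0 hw E.
  have hs := caseA _ _ _ _ _ _ hb hk hu0 hu0' hu (lt_trans huu1 hu1k) hw E.
  have [h _] := Dsign _ _ _ _ hn h3 hu hw.
  have := h hs; lra.
move=> hu0 w2 hw2 hw2' _ n hn h3 u hu huk w hw2w hw E.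
have hs := caseB _ _ _ _ _ _ hb hk hu0 hu huk (lt_trans hw2 hw2w) hw E.
have [_ h] := Dsign _ _ _ _ hn h3 hu hw.
have := h hs; lra.
Qed.
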